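(* Let $\beta$ be an uncountable regular ordinal (so $\mathrm{cf}(\beta)>\omega$), let $j\in\{2,3,4\}$ and $k<j$. Then the ordinal space $\beta\cdot j+1$ is not cleavable over $\beta\cdot k+1$.
   Context: A space $X$ is cleavable over $Y$ if for every $A\subseteq X$ there is a continuous $f:X\to Y$ with $f(A)\cap f(X\setminus A)=\emptyset$. Ordinals carry the order topology; $\beta\cdot j$ is ordinal multiplication. *)

(* Defs.v *)
From Stdlib Require Import Arith.

Section OrderTop.
Variables (X : Type) (lt : X -> X -> Prop).
Definition le_of (x y : X) : Prop := lt x y \/ x = y.

Definition ord_open (U : X -> Prop) : Prop :=
  forall x, U x ->
    ((forall y, ~ lt y x) \/
       exists a, lt a x /\ forall z, lt a z -> le_of z x -> U z) /\
    ((forall y, ~ lt x y) \/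
       exists b, lt x b /\ forall z, le_of x z -> lt z b -> U z).
End OrderTop.

Definition ord_continuous {X Y : Type} (ltX : X -> X -> Prop)
  (ltY : Y -> Y -> Prop) (f : X -> Y) : Prop :=
  forall V : Y -> Prop, ord_open _ ltY V -> ord_open _ ltX (fun x => V (f x)).

Definition cleavable {X Y : Type} (ltX : X -> X -> Prop)
  (ltY : Y -> Y -> Prop) : Prop :=
  forall A : X -> Prop, exists f : X -> Y,
    ord_continuous ltX ltY f /\
    forall x y, A x -> ~ A y -> f x <> f y.

(* A well-ordered type (B, ltB) represents the ordinal beta = its order type. *)
Definition well_order {B : Type} (ltB : B -> B -> Prop) : Prop :=
  well_founded ltB /\
  (forall x, ~ ltB x x) /\
  (forall x y z, ltB x y -> ltB y z -> ltB x z) /\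
  (forall x y, ltB x y \/ x = y \/ ltB y x).

Definition uncountable (B : Type) : Prop :=
  ~ exists f : B -> nat, forall x y, f x = f y -> x = y.

(* regular: cf(beta) = beta, i.e. no map from a proper initial segment
   {x | x < b} (= an ordinal gamma < beta) into beta is cofinal. *)
Definition regular {B : Type} (ltB : B -> B -> Prop) : Prop :=
  forall (b : B) (g : {x : B | ltB x b} -> B),
    exists c, forall x, ltB (g x) c.

(* The ordinal beta*j + 1: points Some (i, a) stand for beta*i + a
   (i < j, a < beta), and None for the top point beta*j. *)
Definition ordpt (B : Type) (j : nat) : Type :=
  option ({i : nat | i < j} * B).

Definition ordpt_lt {B : Type} (ltB : B -> B -> Prop) (j : nat)
  (x y : ordpt B j) : Prop :=
  match x, y with
  | Some (i, a), Some (i', a') =>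
      proj1_sig i < proj1_sig i' \/ (proj1_sig i = proj1_sig i' /\ ltB a a')
  | Some _, None => True
  | None, _ => False
  end.

(* Main.v *)
Require Import Defs.
From Stdlib Require Import Arith Lia Classical ClassicalEpsilon.

Lemma sig_nat_eq (k : nat) (a b : {n : nat | n < k}) :
  proj1_sig a = proj1_sig b -> a = b.
Proof.
  destruct a as [a pa], b as [b pb]; simpl; intro E; subst.
  f_equal; apply le_unique.
Qed.

Lemma wo_min {B} (ltB : B -> B -> Prop) (hwo : well_order ltB) (P : B -> Prop) :
  (exists x, P x) -> exists x, P x /\ forall y, P y -> le_of B ltB x y.
Proof.
  destruct hwo as [wf [irr [tr tot]]]. intros [x0 Hx0].
  apply NNPP; intro Hn.
  assert (forall x, ~ P x) as H.
  { intro x. induction x as [x IH] using (well_founded_ind wf).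
    intro Px. apply Hn. exists x. split; [exact Px|].
    intros y Py. destruct (tot x y) as [h|[h|h]]; unfold le_of; auto.
    exfalso; exact (IH y h Py). }
  exact (H x0 Hx0).
Qed.


Definition islim {B} (ltB : B -> B -> Prop) (a : B) : Prop :=
  (exists z, ltB z a) /\ forall z, ltB z a -> exists w, ltB z w /\ ltB w a.

Definition mx {B} (ltB : B -> B -> Prop) (a b : B) : B :=
  if excluded_middle_informative (ltB a b) then b else a.

Lemma mx_spec {B} (ltB : B -> B -> Prop) (hwo : well_order ltB) a b :
  le_of B ltB a (mx ltB a b) /\ le_of B ltB b (mx ltB a b).
Proof.
  destruct hwo as [wf [irr [tr tot]]]. unfold mx, le_of.
  destruct (excluded_middle_informative (ltB a b)); auto.
  destruct (tot a b) as [h|[h|h]]; try contradiction; subst; auto.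
Qed.

Lemma lt_le_tr {B} (ltB : B -> B -> Prop) (hwo : well_order ltB) a b c :
  ltB a b -> le_of B ltB b c -> ltB a c.
Proof. destruct hwo as [wf [irr [tr tot]]]. intros h [h2|h2]; subst; eauto. Qed.

Lemma le_lt_tr {B} (ltB : B -> B -> Prop) (hwo : well_order ltB) a b c :
  le_of B ltB a b -> ltB b c -> ltB a c.
Proof. destruct hwo as [wf [irr [tr tot]]]. intros [h|h] h2; subst; eauto. Qed.

Lemma le_lt_false {B} (ltB : B -> B -> Prop) (hwo : well_order ltB) a b :
  le_of B ltB a b -> ltB b a -> False.
Proof.
  intros h1 h2. pose proof (le_lt_tr ltB hwo _ _ _ h1 h2) as h.
  destruct hwo as [wf [irr _]]. exact (irr a h).
Qed.

Lemma lt_asym {B} (ltB : B -> B -> Prop) (hwo : well_order ltB) a b :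
  ltB a b -> ltB b a -> False.
Proof. intros h1 h2. apply (le_lt_false ltB hwo a b); [left|]; auto. Qed.

Lemma not_lt_le {B} (ltB : B -> B -> Prop) (hwo : well_order ltB) a b :
  ~ ltB a b -> le_of B ltB b a.
Proof.
  destruct hwo as [wf [irr [tr tot]]]. intro h. unfold le_of.
  destruct (tot a b) as [h1|[h1|h1]]; auto; contradiction.
Qed.

Lemma B_inh {B} (hunc : uncountable B) : exists x : B, True.
Proof.
  apply NNPP; intro H. apply hunc. exists (fun _ => 0).
  intros x. exfalso. apply H. exists x. trivial.
Qed.

Lemma B_two {B} (ltB : B -> B -> Prop) (hwo : well_order ltB) (hunc : uncountable B) :
  exists x y, ltB x y.
Proof.
  destruct hwo as [wf [irr [tr tot]]].
  apply NNPP; intro H. apply hunc. exists (fun _ => 0).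
  intros x y _. destruct (tot x y) as [h|[h|h]]; auto; exfalso; apply H; eauto.
Qed.

Lemma no_max {B} (ltB : B -> B -> Prop) (hwo : well_order ltB) (hunc : uncountable B)
  (hreg : regular ltB) : forall c, exists d, ltB c d.
Proof.
  intro c. destruct (B_two ltB hwo hunc) as [x [y h]].
  destruct (hreg y (fun _ => c)) as [d hd].
  exists d. exact (hd (exist _ x h)).
Qed.

Lemma succ_ex {B} (ltB : B -> B -> Prop) (hwo : well_order ltB) (hunc : uncountable B)
  (hreg : regular ltB) : exists sc : B -> B, forall c,
    ltB c (sc c) /\ forall y, ltB y (sc c) -> le_of B ltB y c.
Proof.
  assert (forall c, exists s, ltB c s /\ forall y, ltB y s -> le_of B ltB y c) as H.
  { intro c. destruct (wo_min ltB hwo (fun y => ltB c y) (no_max ltB hwo hunc hreg c))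
      as [s [hs hmin]].
    exists s. split; auto. intros y hy. apply (not_lt_le ltB hwo).
    intro h. exact (le_lt_false ltB hwo _ _ (hmin y h) hy). }
  exists (fun c => proj1_sig (constructive_indefinite_description _ (H c))).
  intro c. exact (proj2_sig (constructive_indefinite_description _ (H c))).
Qed.

Lemma min_ex {B} (ltB : B -> B -> Prop) (hwo : well_order ltB) (hunc : uncountable B) :
  exists x0, forall y, ~ ltB y x0.
Proof.
  destruct (B_inh hunc) as [x _].
  destruct (wo_min ltB hwo (fun _ => True) (ex_intro _ x I)) as [x0 [_ h]].
  exists x0. intros y hy. exact (le_lt_false ltB hwo _ _ (h y I) hy).
Qed.

Lemma iter_mono {B} (ltB : B -> B -> Prop) (hwo : well_order ltB) (s : nat -> B)
  (hs : forall n, ltB (s n) (s (S n))) : forall n m, n < m -> ltB (s n) (s m).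
Proof.
  intros n m h. induction h.
  - apply hs.
  - destruct hwo as [_ [_ [tr _]]]. eauto.
Qed.

Lemma iter_le {B} (ltB : B -> B -> Prop) (hwo : well_order ltB) (s : nat -> B)
  (hs : forall n, ltB (s n) (s (S n))) : forall n m, n <= m -> le_of B ltB (s n) (s m).
Proof.
  intros n m h. destruct (Nat.eq_dec n m) as [e|e]; [subst; right; auto|].
  left. apply (iter_mono ltB hwo s hs). lia.
Qed.

Lemma choice_fun {A C : Type} (P : A -> C -> Prop) :
  (forall a, exists c, P a c) -> exists g : A -> C, forall a, P a (g a).
Proof.
  intro H. exists (fun a => proj1_sig (constructive_indefinite_description _ (H a))).
  intro a. exact (proj2_sig (constructive_indefinite_description _ (H a))).
Qed.

Lemma omega_bound {B} (ltB : B -> B -> Prop) (hwo : well_order ltB) (hunc : uncountable B)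
  (hreg : regular ltB) : forall s : nat -> B, exists c, forall n, ltB (s n) c.
Proof.
  intro s.
  destruct (succ_ex ltB hwo hunc hreg) as [sc hsc].
  destruct (min_ex ltB hwo hunc) as [x0 hx0].
  set (t := fun n => Nat.iter n sc x0).
  assert (ht : forall n, ltB (t n) (t (S n))) by (intro n; apply hsc).
  assert (hb : exists b, forall n, ltB (t n) b).
  { apply NNPP; intro H.
    assert (H1 : forall b, exists n, le_of B ltB b (t n)).
    { intro b. apply NNPP; intro H2. apply H. exists b. intro n.
      destruct hwo as [_ [_ [_ tot]]].
      destruct (tot (t n) b) as [h|[h|h]]; auto; exfalso; apply H2; exists n;
        unfold le_of; auto. }
    assert (H3 : forall n b, le_of B ltB b (t n) -> exists m, b = t m).
    { induction n; intros b hb.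
      - exists 0. destruct hb as [hb|hb]; auto. exfalso; exact (hx0 _ hb).
      - destruct hb as [hb|hb]; [|exists (S n); auto].
        apply IHn. apply (proj2 (hsc (t n))). exact hb. }
    assert (H4 : forall b, exists m, b = t m).
    { intro b. destruct (H1 b) as [n hn]. exact (H3 n b hn). }
    destruct (choice_fun _ H4) as [G hG].
    apply hunc. exists G. intros x y e. rewrite (hG x), (hG y), e. reflexivity. }
  destruct hb as [b hb].
  assert (H5 : forall x, exists n, (exists m, x = t m) -> x = t n).
  { intro x. destruct (classic (exists m, x = t m)) as [[m hm]|hm].
    - exists m; auto.
    - exists 0; intro h; contradiction. }
  destruct (choice_fun _ H5) as [G hG].
  destruct (hreg b (fun x => s (G (proj1_sig x)))) as [c hc].
  exists c. intro n. specialize (hc (exist _ (t n) (hb n))). simpl in hc.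
  assert (E : G (t n) = n).
  { assert (e : t n = t (G (t n))) by (apply hG; eauto).
    destruct (Nat.lt_total (G (t n)) n) as [l|[l|l]]; auto; exfalso;
      pose proof (iter_mono ltB hwo t ht _ _ l) as h; rewrite <- e in h;
      destruct hwo as [_ [irr _]]; exact (irr _ h). }
  rewrite E in hc. exact hc.
Qed.

Lemma omega_sup {B} (ltB : B -> B -> Prop) (hwo : well_order ltB) (hunc : uncountable B)
  (hreg : regular ltB) (s : nat -> B) (hs : forall n, ltB (s n) (s (S n))) :
  exists a, (forall n, ltB (s n) a) /\ (forall z, ltB z a -> exists n, le_of B ltB z (s n))
     /\ islim ltB a.
Proof.
  destruct (wo_min ltB hwo (fun c => forall n, ltB (s n) c)
     (omega_bound ltB hwo hunc hreg s)) as [a [ha hmin]].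
  assert (H2 : forall z, ltB z a -> exists n, le_of B ltB z (s n)).
  { intros z hz. apply NNPP; intro H. 
    assert (forall n, ltB (s n) z).
    { intro n. apply NNPP; intro h. apply H. exists n. apply (not_lt_le ltB hwo). exact h. }
    exact (le_lt_false ltB hwo _ _ (hmin z H0) hz). }
  exists a. split; [exact ha|split; [exact H2|]].
  split; [exists (s 0); auto|].
  intros z hz. destruct (H2 z hz) as [n hn]. exists (s (S n)). split; auto.
  exact (le_lt_tr ltB hwo _ _ _ hn (hs n)).
Qed.

Lemma lim_above {B} (ltB : B -> B -> Prop) (hwo : well_order ltB) (hunc : uncountable B)
  (hreg : regular ltB) : forall c, exists a, ltB c a /\ islim ltB a.
Proof.
  intro c. destruct (succ_ex ltB hwo hunc hreg) as [sc hsc].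
  destruct (omega_sup ltB hwo hunc hreg (fun n => Nat.iter n sc c) (fun n => proj1 (hsc _)))
    as [a [h1 [_ h3]]].
  exists a. split; auto. exact (h1 0).
Qed.

Lemma succ_nlim {B} (ltB : B -> B -> Prop) (hwo : well_order ltB) (sc : B -> B)
  (hsc : forall c, ltB c (sc c) /\ forall y, ltB y (sc c) -> le_of B ltB y c) c :
  ~ islim ltB (sc c).
Proof.
  intros [_ h]. destruct (h c (proj1 (hsc c))) as [w [h1 h2]].
  exact (le_lt_false ltB hwo _ _ (proj2 (hsc c) w h2) h1).
Qed.

Lemma min_nlim {B} (ltB : B -> B -> Prop) x0 (hx0 : forall y, ~ ltB y x0) : ~ islim ltB x0.
Proof. intros [[z hz] _]. exact (hx0 z hz). Qed.

Lemma opt_trans {B} (ltB : B -> B -> Prop) (hwo : well_order ltB) k (x y z : ordpt B k) :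
  ordpt_lt ltB k x y -> ordpt_lt ltB k y z -> ordpt_lt ltB k x z.
Proof.
  destruct hwo as [_ [_ [tr _]]].
  destruct x as [[i a]|], y as [[i' a']|], z as [[i'' a'']|]; simpl; try tauto.
  intros [h|[e h]] [h2|[e2 h2]]; try (left; lia). right; split; [lia|eauto].
Qed.

Lemma opt_irr {B} (ltB : B -> B -> Prop) (hwo : well_order ltB) k (x : ordpt B k) :
  ~ ordpt_lt ltB k x x.
Proof.
  destruct hwo as [_ [irr _]].
  destruct x as [[i a]|]; simpl; try tauto. intros [h|[_ h]]; [lia|exact (irr a h)].
Qed.

Lemma opt_tot {B} (ltB : B -> B -> Prop) (hwo : well_order ltB) k (x y : ordpt B k) :
  ordpt_lt ltB k x y \/ x = y \/ ordpt_lt ltB k y x.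
Proof.
  destruct hwo as [_ [_ [_ tot]]].
  destruct x as [[i a]|], y as [[i' a']|]; simpl; auto.
  destruct (Nat.lt_total (proj1_sig i) (proj1_sig i')) as [h|[h|h]]; auto.
  destruct (tot a a') as [h2|[h2|h2]]; auto.
  subst. rewrite (sig_nat_eq k i i' h). auto.
Qed.

Lemma up_open {X} (lt : X -> X -> Prop)
  (tr : forall x y z, lt x y -> lt y z -> lt x z) a :
  ord_open X lt (fun z => lt a z).
Proof.
  intros z hz. split.
  - right. exists a. split; auto.
  - destruct (classic (exists b, lt z b)) as [[b hb]|hn].
    + right. exists b. split; auto. intros w [hw|hw] _; subst; eauto.
    + left. intros y hy. apply hn; eauto.
Qed.

Lemma down_open {X} (lt : X -> X -> Prop)
  (tr : forall x y z, lt x y -> lt y z -> lt x z) b :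
  ord_open X lt (fun z => lt z b).
Proof.
  intros z hz. split.
  - destruct (classic (exists a, lt a z)) as [[a ha]|hn].
    + right. exists a. split; auto. intros w _ [hw|hw]; subst; eauto.
    + left. intros y hy. apply hn; eauto.
  - right. exists b. split; auto.
Qed.

Definition nxt {B} (x0 : B) (j : nat) (ii : {n | n < j}) : ordpt B j :=
  match lt_dec (S (proj1_sig ii)) j with
  | left p => Some (exist _ (S (proj1_sig ii)) p, x0)
  | right _ => None
  end.

Lemma seg_lt_nxt {B} (ltB : B -> B -> Prop) x0 j ii y :
  ordpt_lt ltB j (Some (ii, y)) (nxt x0 j ii).
Proof. unfold nxt. destruct (lt_dec _ _); simpl; auto. Qed.

Lemma nbhd_pt {B} (ltB : B -> B -> Prop) (hwo : well_order ltB) j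
  (W : ordpt B j -> Prop) (hW : ord_open _ (ordpt_lt ltB j) W) ii x z :
  W (Some (ii, x)) -> ltB z x ->
  exists c, ltB c x /\ forall y, ltB c y -> le_of B ltB y x -> W (Some (ii, y)).
Proof.
  intros hx hz. destruct (hW _ hx) as [[hl|[a [ha hP]]] _].
  - exfalso. apply (hl (Some (ii, z))). simpl. right; auto.
  - destruct a as [[i' x']|]; simpl in ha; [|contradiction].
    destruct ha as [h|[e h]].
    + exists z. split; auto. intros y _ hy. apply hP; simpl; auto.
      destruct hy as [hy|hy]; [left; simpl; auto|subst; right; auto].
    + exists x'. split; auto. intros y h1 hy. apply hP; simpl; auto.
      destruct hy as [hy|hy]; [left; simpl; auto|subst; right; auto].
Qed.

Lemma nbhd_end {B} (ltB : B -> B -> Prop) (hwo : well_order ltB) j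
  (W : ordpt B j -> Prop) (hW : ord_open _ (ordpt_lt ltB j) W) ii x0 :
  W (nxt x0 j ii) -> (forall y, ~ ltB y x0) ->
  exists c, forall y, ltB c y -> W (Some (ii, y)).
Proof.
  intros hx hx0. destruct (hW _ hx) as [[hl|[a [ha hP]]] _].
  - exfalso. exact (hl (Some (ii, x0)) (seg_lt_nxt ltB x0 j ii x0)).
  - destruct a as [[i' x']|]; [|simpl in ha; contradiction].
    assert (hle : proj1_sig i' <= proj1_sig ii).
    { unfold nxt in ha. destruct (lt_dec _ _) as [p|p]; simpl in ha.
      - destruct ha as [h|[e h]]; [lia|exfalso; exact (hx0 _ h)].
      - destruct i' as [i' pi']; simpl. lia. }
    exists x'. intros y hy. apply hP.
    + simpl. destruct (Nat.eq_dec (proj1_sig i') (proj1_sig ii)); [right; auto|left; lia].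
    + left. apply seg_lt_nxt.
Qed.

Lemma two_tail {B} (ltB : B -> B -> Prop) (hwo : well_order ltB) (P Q : B -> Prop) :
  (exists c, forall y, ltB c y -> P y) -> (exists c, forall y, ltB c y -> Q y) ->
  exists c, forall y, ltB c y -> P y /\ Q y.
Proof.
  intros [c1 h1] [c2 h2]. exists (mx ltB c1 c2). destruct (mx_spec ltB hwo c1 c2) as [a b].
  intros y hy. split; [apply h1|apply h2]; eapply le_lt_tr; eauto.
Qed.

Lemma classify {B} (ltB : B -> B -> Prop) (hwo : well_order ltB) (hunc : uncountable B)
  (hreg : regular ltB) x0 (hx0 : forall y, ~ ltB y x0) k (F : B -> ordpt B k) L
  (Hc : forall V, ord_open _ (ordpt_lt ltB k) V -> V L ->
          exists c, forall y, ltB c y -> V (F y)) :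
  (exists c, forall y, ltB c y -> F y = L) \/
  exists mc, L = nxt x0 k mc /\ forall g, exists c, forall y, ltB c y ->
     F y = L \/ exists w, F y = Some (mc, w) /\ ltB g w.
Proof.
  pose proof (fun a => up_open (ordpt_lt ltB k) (opt_trans ltB hwo k) a) as UO.
  pose proof (fun a => down_open (ordpt_lt ltB k) (opt_trans ltB hwo k) a) as DO.
  destruct (succ_ex ltB hwo hunc hreg) as [sc hsc].
  destruct L as [[mm d]|].
  - destruct (classic (d = x0)) as [ed|ed].
    + subst d. destruct (proj1_sig mm) as [|m'] eqn:Em.
      * left. destruct (Hc _ (DO (Some (mm, sc x0)))) as [c hc]; [simpl; right; split; auto; apply hsc|].
        exists c. intros y hy. specialize (hc y hy).
        destruct (F y) as [[mm' w]|]; simpl in hc; [|contradiction].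
        destruct hc as [h|[e h]]; [lia|].
        destruct (proj2 (hsc x0) w h) as [h'|h']; [exfalso; exact (hx0 _ h')|subst].
        rewrite (sig_nat_eq k mm' mm e). reflexivity.
      * assert (pm : m' < k) by (destruct mm; simpl in Em; lia).
        right. exists (exist _ m' pm). split.
        { unfold nxt. simpl. destruct (lt_dec (S m') k) as [p|p]; [|destruct mm; simpl in *; lia].
          f_equal. f_equal. apply sig_nat_eq. simpl. auto. }
        intro g.
        destruct (two_tail ltB hwo _ _ (Hc _ (UO (Some (exist _ m' pm, g))) ltac:(simpl; left; lia))
           (Hc _ (DO (Some (mm, sc x0))) ltac:(simpl; right; split; auto; apply hsc))) as [c hc].
        exists c. intros y hy. destruct (hc y hy) as [h1 h2].
        destruct (F y) as [[mm' w]|]; simpl in h1, h2; [|contradiction].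
        destruct h2 as [h2|[e2 h2]]; destruct h1 as [h1|[e1 h1]].
        -- lia.
        -- right. exists w. split; auto. f_equal. f_equal. apply sig_nat_eq. simpl. auto.
        -- left. destruct (proj2 (hsc x0) w h2) as [h'|h']; [exfalso; exact (hx0 _ h')|subst].
           rewrite (sig_nat_eq k mm' mm e2). reflexivity.
        -- lia.
    + assert (hd : ltB x0 d).
      { destruct hwo as [_ [_ [_ tot]]]. destruct (tot x0 d) as [h|[h|h]]; auto;
        [subst; contradiction|exfalso; exact (hx0 _ h)]. }
      left.
      assert (H1 : forall x : {x | ltB x d}, exists c, forall y, ltB c y ->
                 ordpt_lt ltB k (Some (mm, proj1_sig x)) (F y)).
      { intro x. apply (Hc _ (UO _)). simpl. right. split; auto. exact (proj2_sig x). }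
      destruct (choice_fun _ H1) as [G hG].
      destruct (hreg d G) as [C hC].
      destruct (Hc _ (DO (Some (mm, sc d)))) as [c2 hc2]; [simpl; right; split; auto; apply hsc|].
      destruct (two_tail ltB hwo (fun y => ltB C y) (fun y => ordpt_lt ltB k (F y) (Some (mm, sc d)))
                 (ex_intro _ C (fun y h => h)) (ex_intro _ c2 hc2)) as [c hc].
      exists c. intros y hy. destruct (hc y hy) as [hCy h2].
      assert (H3 : forall x : {x | ltB x d}, ordpt_lt ltB k (Some (mm, proj1_sig x)) (F y)).
      { intro x. apply hG. destruct hwo as [_ [_ [tr _]]]. eauto. }
      pose proof (H3 (exist _ x0 hd)) as H4. simpl in H4.
      destruct (F y) as [[mm' w]|]; simpl in h2; [|contradiction].
      simpl in H4. destruct h2 as [h2|[e2 h2]]; destruct H4 as [h4|[e4 h4]]; try lia.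
      rewrite (sig_nat_eq k mm' mm e2).
      destruct (proj2 (hsc d) w h2) as [h'|h']; [|subst; reflexivity].
      exfalso. specialize (H3 (exist _ w h')). simpl in H3.
      destruct H3 as [h|[_ h]]; [lia|]. destruct hwo as [_ [irr _]]. exact (irr w h).
  - destruct k as [|k'].
    + left. exists x0. intros y _. destruct (F y) as [[mm w]|]; auto.
      destruct mm as [m pm]. lia.
    + right. exists (exist _ k' (Nat.lt_succ_diag_r k')). split.
      { unfold nxt. simpl. destruct (lt_dec (S k') (S k')); [lia|auto]. }
      intro g. destruct (Hc _ (UO (Some (exist _ k' (Nat.lt_succ_diag_r k'), g))) I) as [c hc].
      exists c. intros y hy. specialize (hc y hy).
      destruct (F y) as [[mm' w]|]; simpl in hc; auto.
      destruct hc as [h|[e h]]; [destruct mm'; simpl in *; lia|].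
      right. exists w. split; auto. f_equal. f_equal. apply sig_nat_eq. simpl. auto.
Qed.

Lemma le_le_tr {B} (ltB : B -> B -> Prop) (hwo : well_order ltB) a b c :
  le_of B ltB a b -> le_of B ltB b c -> le_of B ltB a c.
Proof. intros [h|h] h2; subst; auto. left. eapply lt_le_tr; eauto. Qed.

Lemma at_limit {B} (ltB : B -> B -> Prop) (hwo : well_order ltB) k (F : B -> ordpt B k) mc
  (s : nat -> B) (hs : forall n, ltB (s n) (s (S n))) a
  (ha1 : forall n, ltB (s n) a) (ha2 : forall z, ltB z a -> exists n, le_of B ltB z (s n))
  (P1 : forall n, exists y w, ltB (s n) y /\ ltB y a /\ F y = Some (mc, w) /\ ltB (s n) w /\ ltB w a)
  (C : forall V, ord_open _ (ordpt_lt ltB k) V -> V (F a) ->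
        exists c, ltB c a /\ forall y, ltB c y -> le_of B ltB y a -> V (F y)) :
  F a = Some (mc, a).
Proof.
  pose proof (fun a => up_open (ordpt_lt ltB k) (opt_trans ltB hwo k) a) as UO.
  pose proof (fun a => down_open (ordpt_lt ltB k) (opt_trans ltB hwo k) a) as DO.
  pose proof (iter_le ltB hwo s hs) as sle.
  destruct (opt_tot ltB hwo k (F a) (Some (mc, a))) as [h|[h|h]]; auto; exfalso.
  - assert (Hn : exists n, ordpt_lt ltB k (F a) (Some (mc, s n))).
    { destruct (F a) as [[mm d]|]; simpl in h; [|contradiction].
      destruct h as [h|[e h]].
      - exists 0. simpl. left. exact h.
      - destruct (ha2 d h) as [n hn]. exists (S n). simpl. right. split; auto.
        eapply le_lt_tr; eauto. }
    destruct Hn as [n hn].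
    destruct (C _ (DO _) hn) as [c [hc hP]].
    destruct (ha2 c hc) as [n2 hn2].
    destruct (P1 (max n n2)) as [y [w [h1 [h2 [h3 [h4 h5]]]]]].
    specialize (hP y). rewrite h3 in hP. simpl in hP.
    assert (hy : ltB c y).
    { eapply le_lt_tr; [exact hwo| |exact h1]. eapply le_le_tr; [exact hwo|exact hn2|]. apply sle; lia. }
    destruct (hP hy (or_introl h2)) as [h6|[_ h6]]; [lia|].
    assert (hw : ltB (s n) w).
    { eapply le_lt_tr; [exact hwo| |exact h4]. apply sle; lia. }
    exact (lt_asym ltB hwo _ _ h6 hw).
  - destruct (C _ (UO _) h) as [c [hc hP]].
    destruct (ha2 c hc) as [n2 hn2].
    destruct (P1 n2) as [y [w [h1 [h2 [h3 [h4 h5]]]]]].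
    specialize (hP y). rewrite h3 in hP. simpl in hP.
    assert (hy : ltB c y) by (eapply le_lt_tr; [exact hwo|exact hn2|exact h1]).
    destruct (hP hy (or_introl h2)) as [h6|[_ h6]]; [lia|].
    exact (lt_asym ltB hwo _ _ h6 h5).
Qed.

Definition pos {B} (x0 : B) {k} (z : ordpt B k) : B :=
  match z with Some (_, w) => w | None => x0 end.

Lemma P1_gen {B} (ltB : B -> B -> Prop) (hwo : well_order ltB) x0 k (F : B -> ordpt B k) q mc
  (s : nat -> B) a (cT gd R h N : B -> B)
  (hN1 : forall a, ltB (gd (h a)) (N a)) (hN2 : forall a, ltB (R a) (N a))
  (hh1 : forall a, le_of B ltB a (h a)) (hh2 : forall a, le_of B ltB (cT a) (h a))
  (hgd : forall c, ltB c (gd c) /\ F (gd c) <> q)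
  (hT : forall g y, ltB (cT g) y -> F y = q \/ exists w, F y = Some (mc, w) /\ ltB g w)
  (hR : forall b x, ltB x b -> ltB (pos x0 (F x)) (R b))
  (hsN : forall n, s (S n) = N (s n)) (ha1 : forall n, ltB (s n) a) :
  forall n, exists y w, ltB (s n) y /\ ltB y a /\ F y = Some (mc, w) /\ ltB (s n) w /\ ltB w a.
Proof.
  assert (tr : forall x y z, ltB x y -> ltB y z -> ltB x z) by apply hwo.
  intro n. set (b := s n).
  exists (gd (h b)).
  destruct (hgd (h b)) as [g1 g2].
  assert (hy1 : ltB (gd (h b)) (s (S n))) by (rewrite hsN; apply hN1).
  assert (hc : ltB (cT b) (gd (h b))) by exact (le_lt_tr ltB hwo _ _ _ (hh2 b) g1).
  destruct (hT b (gd (h b)) hc) as [e|[w [e hw]]].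
  - contradiction.
  - exists w. split; [exact (le_lt_tr ltB hwo _ _ _ (hh1 b) g1)|].
    split; [eauto|]. split; [exact e|]. split; [exact hw|].
    pose proof (hR _ _ hy1) as hr. rewrite e in hr. simpl in hr.
    apply tr with (R (s (S n))); auto. apply tr with (s (S (S n))); auto.
    rewrite (hsN (S n)). apply hN2.
Qed.

Lemma collide {B} (ltB : B -> B -> Prop) (hwo : well_order ltB) (hunc : uncountable B)
  (hreg : regular ltB) (x0 : B) k mc (q : ordpt B k) (F1 F2 : B -> ordpt B k)
  (T1 : forall g, exists c, forall y, ltB c y -> F1 y = q \/ exists w, F1 y = Some (mc, w) /\ ltB g w)
  (T2 : forall g, exists c, forall y, ltB c y -> F2 y = q \/ exists w, F2 y = Some (mc, w) /\ ltB g w)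
  (G1 : forall c, exists y, ltB c y /\ F1 y <> q)
  (G2 : forall c, exists y, ltB c y /\ F2 y <> q)
  (C1 : forall a, islim ltB a -> forall V, ord_open _ (ordpt_lt ltB k) V -> V (F1 a) ->
        exists c, ltB c a /\ forall y, ltB c y -> le_of B ltB y a -> V (F1 y))
  (C2 : forall a, islim ltB a -> forall V, ord_open _ (ordpt_lt ltB k) V -> V (F2 a) ->
        exists c, ltB c a /\ forall y, ltB c y -> le_of B ltB y a -> V (F2 y)) :
  exists a, islim ltB a /\ F1 a = F2 a.
Proof.
  destruct (choice_fun _ (fun g => two_tail ltB hwo _ _ (T1 g) (T2 g))) as [cT hcT].
  destruct (choice_fun _ G1) as [gd1 hgd1].
  destruct (choice_fun _ G2) as [gd2 hgd2].
  assert (HR : forall b, exists r, forall x, ltB x b ->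
            ltB (pos x0 (F1 x)) r /\ ltB (pos x0 (F2 x)) r).
  { intro b. destruct (hreg b (fun x => mx ltB (pos x0 (F1 (proj1_sig x))) (pos x0 (F2 (proj1_sig x)))))
      as [r hr]. exists r. intros x hx. specialize (hr (exist _ x hx)). simpl in hr.
    destruct (mx_spec ltB hwo (pos x0 (F1 x)) (pos x0 (F2 x))) as [m1 m2].
    split; eapply le_lt_tr; eauto. }
  destruct (choice_fun _ HR) as [R hR].
  destruct (succ_ex ltB hwo hunc hreg) as [sc hsc].
  set (h := fun a => mx ltB a (cT a)).
  set (N := fun a => sc (mx ltB (gd1 (h a)) (mx ltB (gd2 (h a)) (R a)))).
  assert (hh1 : forall a, le_of B ltB a (h a)) by (intro a; exact (proj1 (mx_spec ltB hwo _ _))).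
  assert (hh2 : forall a, le_of B ltB (cT a) (h a)) by (intro a; exact (proj2 (mx_spec ltB hwo _ _))).
  assert (hN1 : forall a, ltB (gd1 (h a)) (N a)).
  { intro a. exact (le_lt_tr ltB hwo _ _ _ (proj1 (mx_spec ltB hwo _ _)) (proj1 (hsc _))). }
  assert (hN2 : forall a, ltB (gd2 (h a)) (N a)).
  { intro a. refine (le_lt_tr ltB hwo _ _ _ _ (proj1 (hsc _))).
    exact (le_le_tr ltB hwo _ _ _ (proj1 (mx_spec ltB hwo _ _)) (proj2 (mx_spec ltB hwo _ _))). }
  assert (hN3 : forall a, ltB (R a) (N a)).
  { intro a. refine (le_lt_tr ltB hwo _ _ _ _ (proj1 (hsc _))).
    exact (le_le_tr ltB hwo _ _ _ (proj2 (mx_spec ltB hwo _ _)) (proj2 (mx_spec ltB hwo _ _))). }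
  set (s := fun n => Nat.iter n N x0).
  assert (hs : forall n, ltB (s n) (s (S n))).
  { intro n. change (s (S n)) with (N (s n)).
    refine (le_lt_tr ltB hwo _ _ _ (hh1 _) _).
    pose proof hwo as hw2; destruct hw2 as [_ [_ [tr _]]]. eapply tr; [apply hgd1|apply hN1]. }
  destruct (omega_sup ltB hwo hunc hreg s hs) as [a [ha1 [ha2 ha3]]].
  exists a. split; auto.
  assert (E1 : F1 a = Some (mc, a)).
  { apply (at_limit ltB hwo k F1 mc s hs a ha1 ha2); [|exact (C1 a ha3)].
    apply (P1_gen ltB hwo x0 k F1 q mc s a cT gd1 R h N hN1 hN3 hh1 hh2 hgd1); auto.
    - intros g y hy. exact (proj1 (hcT g y hy)).
    - intros b x hx. exact (proj1 (hR b x hx)). }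
  assert (E2 : F2 a = Some (mc, a)).
  { apply (at_limit ltB hwo k F2 mc s hs a ha1 ha2); [|exact (C2 a ha3)].
    apply (P1_gen ltB hwo x0 k F2 q mc s a cT gd2 R h N hN2 hN3 hh1 hh2 hgd2); auto.
    - intros g y hy. exact (proj2 (hcT g y hy)).
    - intros b x hx. exact (proj2 (hR b x hx)). }
  congruence.
Qed.

Definition Acl {B} (ltB : B -> B -> Prop) (j : nat) (p : ordpt B j) : Prop :=
  match p with Some (ii, x) => (islim ltB x <-> 2 <= proj1_sig ii) | None => 3 <= j end.

Definition cb (j i : nat) : bool := if S i <? j then negb (2 <=? S i) else (3 <=? j).

Lemma A_nxt {B} (ltB : B -> B -> Prop) x0 (hx0 : forall y, ~ ltB y x0) j ii :
  Acl ltB j (nxt x0 j ii) <-> cb j (proj1_sig ii) = true.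
Proof.
  unfold nxt, cb. destruct (lt_dec (S (proj1_sig ii)) j) as [p|p]; simpl.
  - assert (E : (S (proj1_sig ii) <? j) = true) by (apply Nat.ltb_lt; auto). rewrite E.
    pose proof (min_nlim ltB x0 hx0) as H.
    destruct (proj1_sig ii) as [|i0]; simpl.
    + split; intro h; auto. split; intro; [contradiction|lia].
    + split; intro h. { exfalso; apply H; apply h; lia. } { discriminate h. }
  - assert (E : (S (proj1_sig ii) <? j) = false) by (apply Nat.ltb_ge; lia). rewrite E.
    destruct j as [|[|[|j0]]]; simpl; split; intro; try lia; try discriminate; auto.
Qed.

Lemma labels j i i' : 2 <= j <= 4 -> i < i' -> i' < j ->
  cb j i <> cb j i' \/ (2 <=? i) <> (2 <=? i').
Proof.
  intros hj h1 h2.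
  assert (j = 2 \/ j = 3 \/ j = 4) as [E|[E|E]] by lia; subst;
  (destruct i as [|[|[|[|i]]]]; [| | | |lia]);
  (destruct i' as [|[|[|[|i']]]]; [| | | |lia]); try lia;
  unfold cb; simpl; (left; discriminate) || (right; discriminate).
Qed.

Lemma pigeon (m : nat -> nat) j k : 2 <= j <= 4 -> k < j -> (forall i, i < j -> m i < k) ->
  exists i i', i < i' /\ i' < j /\ m i = m i'.
Proof.
  intros hj hk hm. apply NNPP; intro H.
  assert (D : forall i i', i < i' -> i' < j -> m i <> m i').
  { intros i i' a b e. apply H. exists i, i'. auto. }
  pose proof (hm 0 ltac:(lia)). pose proof (hm 1 ltac:(lia)).
  pose proof (D 0 1 ltac:(lia) ltac:(lia)).
  assert (j = 2 \/ j = 3 \/ j = 4) as [E|[E|E]] by lia; subst; [lia| |].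
  - pose proof (hm 2 ltac:(lia)). pose proof (D 0 2 ltac:(lia) ltac:(lia)).
    pose proof (D 1 2 ltac:(lia) ltac:(lia)). lia.
  - pose proof (hm 2 ltac:(lia)). pose proof (D 0 2 ltac:(lia) ltac:(lia)).
    pose proof (D 1 2 ltac:(lia) ltac:(lia)). pose proof (hm 3 ltac:(lia)).
    pose proof (D 0 3 ltac:(lia) ltac:(lia)). pose proof (D 1 3 ltac:(lia) ltac:(lia)).
    pose proof (D 2 3 ltac:(lia) ltac:(lia)). lia.
Qed.

Theorem lemma5p1 (B : Type) (ltB : B -> B -> Prop)
  (hwo : well_order ltB) (hunc : uncountable B) (hreg : regular ltB)
  (j k : nat) (hj : 2 <= j <= 4) (hk : k < j) :
  ~ cleavable (ordpt_lt ltB j) (ordpt_lt ltB k).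
Proof.
  intro Hcl.
  destruct (min_ex ltB hwo hunc) as [x0 hx0].
  destruct (succ_ex ltB hwo hunc hreg) as [sc hsc].
  destruct (Hcl (Acl ltB j)) as [f [fc fsep]].
  assert (sep' : forall p p', (Acl ltB j p <-> ~ Acl ltB j p') -> f p <> f p').
  { intros p p' h. destruct (classic (Acl ltB j p)) as [a|a].
    - apply fsep; tauto.
    - intro e. symmetry in e. revert e. apply fsep; tauto. }
  assert (diffpts : forall ii c, exists y1 y2, ltB c y1 /\ ltB c y2 /\
            (Acl ltB j (Some (ii, y1)) <-> ~ Acl ltB j (Some (ii, y2)))).
  { intros ii c. destruct (lim_above ltB hwo hunc hreg c) as [y2 [h1 h2]].
    exists (sc c), y2. split; [apply hsc|]. split; auto. simpl.
    pose proof (succ_nlim ltB hwo sc hsc c). tauto. }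
  assert (Cont : forall ii a, islim ltB a -> forall V, ord_open _ (ordpt_lt ltB k) V ->
        V (f (Some (ii, a))) ->
        exists c, ltB c a /\ forall y, ltB c y -> le_of B ltB y a -> V (f (Some (ii, y))) ).
  { intros ii a [[z hz] _] V hV hVa.
    exact (nbhd_pt ltB hwo j (fun p => V (f p)) (fc V hV) ii a z hVa hz). }
  assert (Good : forall ii, exists mc, f (nxt x0 j ii) = nxt x0 k mc /\
     forall g, exists c, forall y, ltB c y ->
     f (Some (ii, y)) = f (nxt x0 j ii) \/ exists w, f (Some (ii, y)) = Some (mc, w) /\ ltB g w).
  { intro ii.
    assert (Hc : forall V, ord_open _ (ordpt_lt ltB k) V -> V (f (nxt x0 j ii)) ->
          exists c, forall y, ltB c y -> V (f (Some (ii, y))))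
      by (intros V hV hVL; exact (nbhd_end ltB hwo j (fun p => V (f p)) (fc V hV) ii x0 hVL hx0)).
    destruct (classify ltB hwo hunc hreg x0 hx0 k (fun y => f (Some (ii, y))) (f (nxt x0 j ii)) Hc)
      as [[c hc]|H]; [|exact H].
    exfalso. destruct (diffpts ii c) as [y1 [y2 [h1 [h2 h3]]]].
    apply (sep' _ _ h3). rewrite (hc y1 h1), (hc y2 h2). reflexivity. }
  assert (Gd : forall ii c, exists y, ltB c y /\ f (Some (ii, y)) <> f (nxt x0 j ii)).
  { intros ii c. destruct (diffpts ii c) as [y1 [y2 [h1 [h2 h3]]]].
    destruct (classic (Acl ltB j (Some (ii, y1)) <-> ~ Acl ltB j (nxt x0 j ii))) as [e|e].
    - exists y1. split; auto.
    - exists y2. split; auto. apply sep'. tauto. }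
  destruct (choice_fun _ Good) as [M hM].
  set (m := fun i => match lt_dec i j with left p => proj1_sig (M (exist _ i p)) | right _ => 0 end).
  assert (Em : forall i (p : i < j), m i = proj1_sig (M (exist _ i p))).
  { intros i p. unfold m. destruct (lt_dec i j) as [p'|p']; [|lia].
    replace p' with p by apply le_unique. reflexivity. }
  destruct (pigeon m j k hj hk) as [i [i' [h1 [h2 h3]]]].
  { intros i hi. rewrite (Em i hi). destruct (M _) as [mv pmv]. exact pmv. }
  assert (pi : i < j) by lia.
  set (ii := exist (fun n => n < j) i pi). set (ii' := exist (fun n => n < j) i' h2).
  rewrite (Em i pi), (Em i' h2) in h3. fold ii ii' in h3.
  apply sig_nat_eq in h3.
  destruct (hM ii) as [e1 T1]. destruct (hM ii') as [e2 T2].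
  assert (Eq : f (nxt x0 j ii) = f (nxt x0 j ii')) by congruence.
  destruct (labels j i i' hj h1 h2) as [L|L].
  - apply (sep' (nxt x0 j ii) (nxt x0 j ii')); [|exact Eq].
    rewrite (A_nxt ltB x0 hx0 j ii), (A_nxt ltB x0 hx0 j ii'). simpl.
    destruct (cb j i), (cb j i'); intuition congruence.
  - rewrite h3 in T1. rewrite <- Eq in T2.
    destruct (collide ltB hwo hunc hreg x0 k (M ii') (f (nxt x0 j ii))
       (fun y => f (Some (ii, y))) (fun y => f (Some (ii', y))) T1 T2
       (Gd ii) (fun c => ltac:(rewrite Eq; exact (Gd ii' c))) (Cont ii) (Cont ii'))
      as [a [ha hEq]].
    apply (sep' (Some (ii, a)) (Some (ii', a))); [|exact hEq].
    simpl. destruct (2 <=? i) eqn:Ei, (2 <=? i') eqn:Ei'; try congruence.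
    + apply Nat.leb_le in Ei; apply Nat.leb_gt in Ei'.
      assert (~ 2 <= i') by lia. tauto.
    + apply Nat.leb_gt in Ei; apply Nat.leb_le in Ei'.
      assert (~ 2 <= i) by lia. tauto.
Qed.
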